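(* Let $\Gamma$ be a $\Bbbk$-algebra, $\sim$ an equivalence relation on $\mathrm{cfs}(\Gamma)$, and $B\in\mathrm{cfs}(\Gamma)/{\sim}$. Then the Jacobson radical of $\hat\Gamma_B$ is $\mathrm{Rad}(\hat\Gamma_B)=\bigcap_{\mathfrak m\in B}\ker(\pi_{\mathfrak m})$.
   Context: $\mathrm{cfs}(\Gamma)$: maximal two-sided ideals $\mathfrak m$ with $\dim\Gamma/\mathfrak m<\infty$. For a class $B$, $\mathcal W(B)=\{\mathfrak m_1\cdots\mathfrak m_k:k\ge0,\mathfrak m_i\in B\}$, directed by reverse inclusion. $\hat\Gamma_B=\varprojlim_{\mathfrak m\in\mathcal W(B)}\Gamma/\mathfrak m$, and $\pi_{\mathfrak m}:\hat\Gamma_B\to\Gamma/\mathfrak m$ is the canonical projection. *)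

(* Defs.v *)
From HB Require Import structures.
From mathcomp Require Import all_boot all_algebra.
Set Implicit Arguments. Unset Strict Implicit. Unset Printing Implicit Defensive.
Import GRing.Theory.
Local Open Scope ring_scope.

Section Ideals.
Variable R : pzRingType.

Definition two_sided_ideal (I : R -> Prop) : Prop :=
  [/\ I 0, (forall x y, I x -> I y -> I (x - y)),
      (forall a x, I x -> I (a * x)) & (forall a x, I x -> I (x * a))].

Definition maximal_two_sided_ideal (I : R -> Prop) : Prop :=
  [/\ two_sided_ideal I, (exists x, ~ I x) &
      forall J, two_sided_ideal J -> (forall x, I x -> J x) ->
        (forall x, J x) \/ (forall x, J x -> I x)].

Definition ideal_mul (I J : R -> Prop) : R -> Prop := fun x =>
  exists n (a b : 'I_n -> R), (forall i, I (a i)) /\ (forall i, J (b i)) /\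
    x = \sum_(i < n) a i * b i.

Definition ideal_top : R -> Prop := fun _ => True.

(* W(B) = { m_1 ... m_k : k >= 0, m_i in B } (empty product = the whole ring) *)
Definition inW (B : (R -> Prop) -> Prop) (m : R -> Prop) : Prop :=
  exists s : seq (R -> Prop), foldr (fun I P => B I /\ P) True s /\
    forall x, m x <-> foldr ideal_mul ideal_top s x.

(* C is a coset a + I, i.e. an element of R / I *)
Definition is_coset (I C : R -> Prop) : Prop :=
  exists a, forall x, C x <-> I (x - a).

(* The inverse limit  lim_{m in W} R/m  (W directed by reverse inclusion):
   families (x_m)_m of cosets x_m in R/m, compatible with the canonical
   maps R/m -> R/m' for m ⊆ m' (which send the coset a+m to a+m' ⊇ a+m). *)
Record inv_limit (W : (R -> Prop) -> Prop) := InvLimit {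
  lim_fun :> (R -> Prop) -> R -> Prop;
  lim_coset : forall m, W m -> is_coset m (lim_fun m);
  lim_out : forall m, ~ W m -> forall x, ~ lim_fun m x;
  lim_compat : forall m m', W m -> W m' -> (forall x, m x -> m' x) ->
     forall x, lim_fun m x -> lim_fun m' x }.

Section LimitRing.
Variable W : (R -> Prop) -> Prop.
Local Notation L := (inv_limit W).

(* Ring structure of the limit, componentwise (described by its graph:
   z = x + y, z = x * y, z = 0, componentwise in every R/m, m in W). *)
Definition lim_is_zero (z : L) : Prop := forall m, W m -> z m 0.
Definition lim_is_add (x y z : L) : Prop :=
  forall m, W m -> forall a b, x m a -> y m b -> z m (a + b).
Definition lim_is_mul (x y z : L) : Prop :=
  forall m, W m -> forall a b, x m a -> y m b -> z m (a * b).

Definition lim_left_ideal (J : L -> Prop) : Prop :=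
  [/\ (forall z, lim_is_zero z -> J z),
      (forall x y z, J x -> J y -> lim_is_add x y z -> J z) &
      (forall a x z, J x -> lim_is_mul a x z -> J z)].

Definition lim_maximal_left_ideal (J : L -> Prop) : Prop :=
  [/\ lim_left_ideal J, (exists x, ~ J x) &
      forall J', lim_left_ideal J' -> (forall x, J x -> J' x) ->
        (forall x, J' x) \/ (forall x, J' x -> J x)].

Definition lim_jacobson_radical (x : L) : Prop :=
  forall J, lim_maximal_left_ideal J -> J x.

(* x in ker(pi_m): the m-component of x is the zero coset 0 + m = m *)
Definition in_ker_proj (m : R -> Prop) (x : L) : Prop :=
  forall a, x m a <-> m a.

End LimitRing.
End Ideals.

(* cofinite: dim_k (Gamma / m) < oo, i.e. finitely many elements span Gamma modulo m *)
Definition finite_codim (k : fieldType) (G : lmodType k) (m : G -> Prop) : Prop :=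
  exists s : seq G, forall x, exists c : 'I_(size s) -> k,
    m (x - \sum_(i < size s) c i *: s`_i).

Definition cfs (k : fieldType) (G : algType k) (m : G -> Prop) : Prop :=
  maximal_two_sided_ideal m /\ finite_codim m.

(* Main.v *)
Require Import Defs.
From mathcomp Require Import all_boot all_algebra.
From Stdlib Require Import Classical ClassicalEpsilon.
Import GRing.Theory.
Local Open Scope ring_scope.

Definition eqm {R : pzRingType} (I : R -> Prop) (a b : R) := I (a - b).

Lemma ti0 {R : pzRingType} (I : R -> Prop) : two_sided_ideal I -> I 0.
Proof. by case. Qed.
Lemma tiB {R : pzRingType} (I : R -> Prop) x y : two_sided_ideal I -> I x -> I y -> I (x - y).
Proof. by case=> _ H _ _; apply: H. Qed.
Lemma tiN {R : pzRingType} (I : R -> Prop) x : two_sided_ideal I -> I x -> I (- x).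
Proof. move=> H Hx; rewrite -sub0r; apply: tiB => //; exact: ti0. Qed.
Lemma tiD {R : pzRingType} (I : R -> Prop) x y : two_sided_ideal I -> I x -> I y -> I (x + y).
Proof. move=> H Hx Hy; rewrite -[y]opprK; apply: tiB => //; exact: tiN. Qed.
Lemma tiMl {R : pzRingType} (I : R -> Prop) a x : two_sided_ideal I -> I x -> I (a * x).
Proof. by case=> _ _ H _; apply: H. Qed.
Lemma tiMr {R : pzRingType} (I : R -> Prop) a x : two_sided_ideal I -> I x -> I (x * a).
Proof. by case=> _ _ _ H; apply: H. Qed.

Lemma eqm_refl {R : pzRingType} (I : R -> Prop) a : two_sided_ideal I -> eqm I a a.
Proof. by move=> H; rewrite /eqm subrr; apply: ti0. Qed.
Lemma eqm_eq {R : pzRingType} (I : R -> Prop) a b : two_sided_ideal I -> a = b -> eqm I a b.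
Proof. by move=> H ->; apply: eqm_refl. Qed.
Lemma eqm_sym {R : pzRingType} (I : R -> Prop) a b : two_sided_ideal I -> eqm I a b -> eqm I b a.
Proof. by move=> H Hab; rewrite /eqm -opprB; apply: tiN. Qed.
Lemma eqm_trans {R : pzRingType} (I : R -> Prop) b a c : two_sided_ideal I ->
  eqm I a b -> eqm I b c -> eqm I a c.
Proof.
move=> H H1 H2; rewrite /eqm -[a](subrK b) -addrA; apply: tiD => //.
Qed.
Lemma eqm_add {R : pzRingType} (I : R -> Prop) a b c d : two_sided_ideal I ->
  eqm I a b -> eqm I c d -> eqm I (a + c) (b + d).
Proof.
move=> H H1 H2; rewrite /eqm opprD addrACA; exact: tiD.
Qed.
Lemma eqm_opp {R : pzRingType} (I : R -> Prop) a b : two_sided_ideal I ->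
  eqm I a b -> eqm I (- a) (- b).
Proof. by move=> H H1; rewrite /eqm -opprD; apply: tiN. Qed.
Lemma eqm_sub {R : pzRingType} (I : R -> Prop) a b c d : two_sided_ideal I ->
  eqm I a b -> eqm I c d -> eqm I (a - c) (b - d).
Proof. by move=> H H1 H2; apply: eqm_add => //; apply: eqm_opp. Qed.
Lemma eqm_mul {R : pzRingType} (I : R -> Prop) a b c d : two_sided_ideal I ->
  eqm I a b -> eqm I c d -> eqm I (a * c) (b * d).
Proof.
move=> H H1 H2; apply: (@eqm_trans _ _ (b * c)) => //.
  by rewrite /eqm -mulrBl; apply: tiMr.
by rewrite /eqm -mulrBr; apply: tiMl.
Qed.
Lemma eqm_mem {R : pzRingType} (I : R -> Prop) a : I a <-> eqm I a 0.
Proof. by rewrite /eqm subr0. Qed.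
Lemma eqm_memW {R : pzRingType} (I : R -> Prop) a b : two_sided_ideal I ->
  eqm I a b -> I b -> I a.
Proof. move=> H H1 H2; apply/(eqm_mem I a); apply: eqm_trans H1 _ => //; exact: (proj1 (eqm_mem I b) H2). Qed.

Definition lideal {R : pzRingType} (I : R -> Prop) :=
  [/\ I 0, (forall x y, I x -> I y -> I (x - y)) & (forall a x, I x -> I (a * x))].
Definition maxleft {R : pzRingType} (M : R -> Prop) :=
  [/\ lideal M, (exists x, ~ M x) &
      forall J, lideal J -> (forall x, M x -> J x) ->
        (forall x, J x) \/ (forall x, J x -> M x)].

Lemma li0 {R : pzRingType} (I : R -> Prop) : lideal I -> I 0.
Proof. by case. Qed.
Lemma liB {R : pzRingType} (I : R -> Prop) x y : lideal I -> I x -> I y -> I (x - y).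
Proof. by case=> _ H _; apply: H. Qed.
Lemma liN {R : pzRingType} (I : R -> Prop) x : lideal I -> I x -> I (- x).
Proof. move=> H Hx; rewrite -sub0r; apply: liB => //; exact: li0. Qed.
Lemma liD {R : pzRingType} (I : R -> Prop) x y : lideal I -> I x -> I y -> I (x + y).
Proof. move=> H Hx Hy; rewrite -[y]opprK; apply: liB => //; exact: liN. Qed.
Lemma liM {R : pzRingType} (I : R -> Prop) a x : lideal I -> I x -> I (a * x).
Proof. by case=> _ _ H; apply: H. Qed.
Lemma li_of_ti {R : pzRingType} (I : R -> Prop) : two_sided_ideal I -> lideal I.
Proof. by case. Qed.
Lemma li_eqm {R : pzRingType} (I m : R -> Prop) a b : lideal I -> (forall x, m x -> I x) ->
  eqm m a b -> I b -> I a.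
Proof. move=> H Hm H1 H2; rewrite -[a](subrK b); apply: liD => //; exact: Hm. Qed.
Lemma ml_not1 {R : pzRingType} (M : R -> Prop) : maxleft M -> ~ M 1.
Proof. by case=> H [x Hx] _ H1; apply: Hx; rewrite -[x]mulr1; apply: liM. Qed.

Lemma maxleft_gen {R : pzRingType} (M : R -> Prop) b : maxleft M -> ~ M b ->
  forall g, exists c d, M c /\ g = c + d * b.
Proof.
move=> [HM _ Hmax] Hb.
pose K g := exists c d, M c /\ g = c + d * b.
have HK : lideal K.
  split.
  - by exists 0, 0; rewrite mul0r addr0; split => //; apply: li0.
  - move=> x y [c1 [d1 [H1 ->]]] [c2 [d2 [H2 ->]]].
    exists (c1 - c2), (d1 - d2); split; first by apply: liB.
    by rewrite mulrBl opprD addrACA.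
  - move=> a x [c [d [H1 ->]]]; exists (a * c), (a * d); split; first by apply: liM.
    by rewrite mulrDr mulrA.
have MK : forall x, M x -> K x by move=> x Hx; exists x, 0; rewrite mul0r addr0.
case: (Hmax K HK MK) => [// | HKM].
exfalso; apply: Hb; apply: HKM; exists 0, 1; rewrite mul1r add0r; split => //; exact: li0.
Qed.

Lemma maxleft_quot {R : pzRingType} (M m : R -> Prop) r : maxleft M -> two_sided_ideal m ->
  (forall x, m x -> M x) -> ~ M r ->
  maxleft (fun z => M (z * r)) /\ (forall x, m x -> M (x * r)).
Proof.
move=> HMM Hm HmM Hr; have [HM _ Hmax] := HMM.
split; last by move=> x Hx; apply: HmM; apply: tiMr.
split.
- split; first by rewrite mul0r; apply: li0.
  + by move=> x y Hx Hy; rewrite mulrBl; apply: liB.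
  + by move=> a x Hx; rewrite -mulrA; apply: liM.
- by exists 1; rewrite mul1r.
- move=> J HJ HJM.
  case: (classic (exists y, J y /\ ~ M (y * r))) => [[y [Jy Hy]]|Hn]; last first.
    right=> x Jx; apply: NNPP => Hx; apply: Hn; by exists x.
  left=> z; have [c [d [Hc Hz]]] := @maxleft_gen _ M (y * r) HMM Hy (z * r).
  have H1 : J (z - d * y).
    apply: HJM; by rewrite mulrBl Hz mulrA addrK.
  rewrite -[z](subrK (d * y)); apply: liD => //; exact: liM.
Qed.


Lemma liZ (k : fieldType) (G : algType k) (I : G -> Prop) (c : k) x : lideal I -> I x -> I (c *: x).
Proof. by move=> H Hx; rewrite -mulr_algl; apply: liM. Qed.

Lemma span_step (k : fieldType) (G : algType k) (I J : G -> Prop) n (v : 'I_n.+1 -> G) y :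
  lideal I -> lideal J -> (forall x, I x -> J x) -> J y -> ~ I y ->
  (forall x, exists c : 'I_n.+1 -> k, I (x - \sum_(i < n.+1) c i *: v i)) ->
  exists j : 'I_n.+1, forall x, exists c : 'I_n -> k, J (x - \sum_(i < n) c i *: v (lift j i)).
Proof.
move=> HI HJ HIJ Jy Iy Hsp.
have [cy Hy] := Hsp y.
have [j Hj] : exists j, cy j != 0.
  apply: NNPP => Hn; apply: Iy.
  have E : \sum_(i < n.+1) cy i *: v i = 0.
    apply: big1 => i _; case: (eqVneq (cy i) 0) => [->|Hi]; first by rewrite scale0r.
    by exfalso; apply: Hn; exists i.
  by move: Hy; rewrite E subr0.
exists j => x.
have [c Hx] := Hsp x.
pose e := c j / cy j.
exists (fun i => c (lift j i) - e * cy (lift j i)).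
have [A HA Ex] : exists2 A, I A & x = A + \sum_(i < n.+1) c i *: v i.
  by exists (x - \sum_(i < n.+1) c i *: v i); rewrite ?subrK.
have [Bv HB Ey] : exists2 Bv, I Bv & y = Bv + \sum_(i < n.+1) cy i *: v i.
  by exists (y - \sum_(i < n.+1) cy i *: v i); rewrite ?subrK.
rewrite (bigD1_ord j) //= in Ex; rewrite (bigD1_ord j) //= in Ey.
set S' := \sum_(i < n) _ in Ex; set S := \sum_(i < n) _ in Ey.
have ES : \sum_(i < n) (c (lift j i) - e * cy (lift j i)) *: v (lift j i) = S' - e *: S.
  rewrite /S /S' scaler_sumr -sumrB; apply: eq_bigr => i _.
  by rewrite scalerBl scalerA.
have Jey : J (e *: y) by apply: liZ.
rewrite Ey in Jey; rewrite ES Ex.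
have -> : A + (c j *: v j + S') - (S' - e *: S) = (A - e *: Bv) + e *: (Bv + (cy j *: v j + S)).
  rewrite !scalerDr scalerA divfK // opprB.
  rewrite [RHS]addrA subrK -addrA; congr (A + _).
  by rewrite addrACA subrr addr0.
apply: liD => //.
by apply: HIJ; apply: liB => //; apply: liZ.
Qed.


Lemma exists_maxleft_aux (k : fieldType) (G : algType k) (m : G -> Prop) N :
  forall n (v : 'I_n -> G) (I : G -> Prop), (n <= N)%N -> lideal I -> (forall x, m x -> I x) -> ~ I 1 ->
  (forall x, exists c : 'I_n -> k, I (x - \sum_(i < n) c i *: v i)) ->
  exists M, maxleft M /\ forall x, m x -> M x.
Proof.
elim: N => [|N IH] n v I hn HI HmI HI1 Hsp;
 (case: (classic (exists J, lideal J /\ (forall x, I x -> J x) /\ ~ J 1 /\ exists y, J y /\ ~ I y))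
   => [[J [HJ [HIJ [HJ1 [y [Jy Iy]]]]]] | Hn]; last first);
 try (exists I; split => //; split => //; [by exists 1 | ];
   move=> J HJ HIJ; case: (classic (J 1)) => HJ1;
   [ by left=> x; rewrite -[x]mulr1; apply: liM
   | right=> x Jx; apply: NNPP => Ix; apply: Hn; exists J; split => //; split => //; split => //; by exists x ]).
- case: n v hn Hsp => [|n] v hn Hsp; last by [].
  by exfalso; apply: HI1; have [c Hc] := Hsp 1; move: Hc; rewrite big_ord0 subr0.
- case: n v hn Hsp => [|n] v hn Hsp.
    by exfalso; apply: HI1; have [c Hc] := Hsp 1; move: Hc; rewrite big_ord0 subr0.
  have [j Hj] := @span_step k G I J n v y HI HJ HIJ Jy Iy Hsp.
  apply: (IH n (fun i => v (lift j i)) J) => //.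
  by move=> x Hx; apply: HIJ; apply: HmI.
Qed.

Lemma exists_maxleft (k : fieldType) (G : algType k) (m : G -> Prop) :
  two_sided_ideal m -> (exists x, ~ m x) -> finite_codim m ->
  exists M, maxleft M /\ forall x, m x -> M x.
Proof.
move=> Hm [x0 Hx0] [s Hs].
apply: (@exists_maxleft_aux k G m (size s) (size s) (fun i => s`_i) m) => //.
- exact: li_of_ti.
- by move=> H1; apply: Hx0; rewrite -[x0]mulr1; apply: tiMl.
Qed.


Lemma avoid_maxleft (k : fieldType) (G : algType k) (m : G -> Prop) a :
  maximal_two_sided_ideal m -> finite_codim m -> ~ m a ->
  exists M, [/\ maxleft M, (forall x, m x -> M x) & ~ M a].
Proof.
move=> [Hm Hprop Hmax] Hfc Ha.
apply: NNPP => Hn.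
have HA : forall M, maxleft M -> (forall x, m x -> M x) -> M a.
  move=> M H1 H2; apply: NNPP => H3; apply: Hn; by exists M.
pose T t := forall M, maxleft M -> (forall x, m x -> M x) -> forall r, M (t * r).
have HT : two_sided_ideal T.
  split.
  - by move=> M HM _ r; rewrite mul0r; apply: li0; case: HM.
  - move=> x y Hx Hy M HM HmM r; rewrite mulrBl; apply: liB; [by case: HM|by apply: Hx|by apply: Hy].
  - move=> b x Hx M HM HmM r; rewrite -mulrA; apply: liM; [by case: HM|by apply: Hx].
  - move=> b x Hx M HM HmM r; rewrite -mulrA; by apply: Hx.
have HmT : forall x, m x -> T x.
  by move=> x Hx M HM HmM r; apply: HmM; apply: tiMr.
have Ta : T a.
  move=> M HM HmM r; case: (classic (M r)) => Hr.
    by apply: liM => //; case: HM.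
  have [H1 H2] := @maxleft_quot _ M m r HM Hm HmM Hr.
  exact: (HA _ H1 H2).
case: (Hmax T HT HmT) => [Hall | HTm]; last by apply: Ha; apply: HTm.
have [M [HM HmM]] := @exists_maxleft k G m Hm Hprop Hfc.
apply: (@ml_not1 _ M HM); rewrite -[1](mulr1 1); exact: (Hall 1 M HM HmM 1).
Qed.


Lemma ti_sum {R : pzRingType} (I : R -> Prop) n (F : 'I_n -> R) :
  two_sided_ideal I -> (forall i, I (F i)) -> I (\sum_(i < n) F i).
Proof.
move=> H HF; apply: (big_ind I); [exact: ti0| |by move=> i _; apply: HF].
by move=> x y; apply: tiD.
Qed.

Lemma ti_ext {R : pzRingType} (P Q : R -> Prop) :
  (forall x, P x <-> Q x) -> two_sided_ideal Q -> two_sided_ideal P.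
Proof.
move=> E [H0 HB HL HR]; split.
- by apply/E.
- by move=> x y /E Hx /E Hy; apply/E; apply: HB.
- by move=> a x /E Hx; apply/E; apply: HL.
- by move=> a x /E Hx; apply/E; apply: HR.
Qed.

Lemma ti_top {R : pzRingType} : two_sided_ideal (@ideal_top R).
Proof. by []. Qed.

Lemma ti_mul {R : pzRingType} (I J : R -> Prop) :
  two_sided_ideal I -> two_sided_ideal J -> two_sided_ideal (ideal_mul I J).
Proof.
move=> HI HJ; split.
- exists 0%N, (fun _ => 0), (fun _ => 0); split => [[]//|]; split => [[]//|].
  by rewrite big_ord0.
- move=> x y [n1 [a1 [b1 [Ha1 [Hb1 ->]]]]] [n2 [a2 [b2 [Ha2 [Hb2 ->]]]]].
  exists (n1 + n2)%N,
    (fun i => match split i with inl j => a1 j | inr j => - a2 j end),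
    (fun i => match split i with inl j => b1 j | inr j => b2 j end).
  split; first by move=> i; case: (split i) => j //; apply: tiN.
  split; first by move=> i; case: (split i) => j //.
  rewrite big_split_ord /=; congr (_ + _).
    by apply: eq_bigr => i _; rewrite -[lshift n2 i]/(unsplit (inl i)) unsplitK.
  rewrite -sumrN; apply: eq_bigr => i _.
  by rewrite -[rshift n1 i]/(unsplit (inr i)) unsplitK mulNr.
- move=> c x [n [a [b [Ha [Hb ->]]]]].
  exists n, (fun i => c * a i), b; split; first by move=> i; apply: tiMl.
  split => //; rewrite mulr_sumr; apply: eq_bigr => i _; by rewrite mulrA.
- move=> c x [n [a [b [Ha [Hb ->]]]]].
  exists n, a, (fun i => b i * c); split => //.
  split; first by move=> i; apply: tiMr.
  rewrite mulr_suml; apply: eq_bigr => i _; by rewrite mulrA.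
Qed.

Lemma ideal_mul_subl {R : pzRingType} (I J : R -> Prop) x :
  two_sided_ideal I -> ideal_mul I J x -> I x.
Proof.
move=> HI [n [a [b [Ha [Hb ->]]]]]; apply: ti_sum => // i; exact: tiMr.
Qed.
Lemma ideal_mul_subr {R : pzRingType} (I J : R -> Prop) x :
  two_sided_ideal J -> ideal_mul I J x -> J x.
Proof.
move=> HJ [n [a [b [Ha [Hb ->]]]]]; apply: ti_sum => // i; exact: tiMl.
Qed.

Lemma foldr_ti {R : pzRingType} (B : (R -> Prop) -> Prop) (s : seq (R -> Prop)) :
  (forall I, B I -> two_sided_ideal I) -> foldr (fun I P => B I /\ P) True s ->
  two_sided_ideal (foldr (@ideal_mul R) (@ideal_top R) s).
Proof.
move=> hB; elim: s => [|I s IH] /= H; first exact: ti_top.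
case: H => H1 H2; apply: ti_mul; [exact: hB | exact: IH].
Qed.

Lemma foldr_sub {R : pzRingType} (B : (R -> Prop) -> Prop) (s : seq (R -> Prop)) x :
  (forall I, B I -> two_sided_ideal I) -> foldr (fun I P => B I /\ P) True s ->
  foldr (@ideal_mul R) (@ideal_top R) s x -> forall I, List.In I s -> I x.
Proof.
move=> hB; elim: s x => [|J s IH] x //= [H1 H2] Hx I [<-|HI].
  exact: (@ideal_mul_subl R J _ x (hB _ H1) Hx).
apply: IH => //; apply: (@ideal_mul_subr R J _ x _ Hx); exact: (@foldr_ti R B s hB H2).
Qed.

Lemma foldr_pow {R : pzRingType} (s : seq (R -> Prop)) t :
  (forall I, List.In I s -> I t) -> foldr (@ideal_mul R) (@ideal_top R) s (t ^+ size s).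
Proof.
elim: s => [|J s IH] //= H.
exists 1%N, (fun _ => t), (fun _ => t ^+ size s); split; first by move=> _; apply: H; left.
split; first by move=> _; apply: IH => I HI; apply: H; right.
by rewrite big_ord1 exprS.
Qed.

Lemma W_ti {R : pzRingType} (B : (R -> Prop) -> Prop) w :
  (forall I, B I -> two_sided_ideal I) -> inW B w -> two_sided_ideal w.
Proof. move=> hB [s [Hs E]]; apply: (@ti_ext R w _ E); exact: (@foldr_ti R B s hB Hs). Qed.

Lemma B_W {R : pzRingType} (B : (R -> Prop) -> Prop) m :
  (forall I, B I -> two_sided_ideal I) -> B m -> inW B m.
Proof.
move=> hB Bm; exists [:: m]; split => //= x; split.
  move=> Hx; exists 1%N, (fun _ => x), (fun _ => 1); split => //.
  by split => //; rewrite big_ord1 mulr1.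
by apply: ideal_mul_subl; apply: hB.
Qed.


Definition rep {R : pzRingType} {W : (R -> Prop) -> Prop} (x : inv_limit W) (w : R -> Prop) : R :=
  epsilon (inhabits 0) (fun a => x w a).

Definition compat {R : pzRingType} (W : (R -> Prop) -> Prop) (r : (R -> Prop) -> R) :=
  forall w w', W w -> W w' -> (forall z, w z -> w' z) -> eqm w' (r w) (r w').

Lemma rep_in {R : pzRingType} {W : (R -> Prop) -> Prop} (x : inv_limit W) w :
  (forall w, W w -> two_sided_ideal w) -> W w -> x w (rep x w).
Proof.
move=> hW Hw; have [a Ha] := @lim_coset _ _ x w Hw.
rewrite /rep; apply: epsilon_spec; exists a; apply/Ha; rewrite subrr; apply: ti0; exact: hW.
Qed.

Lemma mem_rep {R : pzRingType} {W : (R -> Prop) -> Prop} (x : inv_limit W) {w a} :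
  (forall w, W w -> two_sided_ideal w) -> W w -> (x w a <-> eqm w a (rep x w)).
Proof.
move=> hW Hw; have Ht := hW w Hw; have [a0 Ha] := @lim_coset _ _ x w Hw.
have H1 : eqm w (rep x w) a0 by apply/Ha; apply: rep_in.
split.
  move=> /Ha H2; apply: (@eqm_trans _ _ a0) => //; exact: eqm_sym.
move=> H2; apply/Ha; exact: (@eqm_trans _ _ (rep x w)).
Qed.

Lemma compat_rep {R : pzRingType} {W : (R -> Prop) -> Prop} (x : inv_limit W) :
  (forall w, W w -> two_sided_ideal w) -> compat W (rep x).
Proof.
move=> hW w w' Hw Hw' Hs; apply/(mem_rep x hW Hw').
apply: (@lim_compat _ _ x w w' Hw Hw' Hs); exact: rep_in.
Qed.

Lemma compat_const {R : pzRingType} {W : (R -> Prop) -> Prop} (c : R) :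
  (forall w, W w -> two_sided_ideal w) -> compat W (fun _ => c).
Proof. move=> hW w w' Hw Hw' Hs; apply: eqm_refl; exact: hW. Qed.

Lemma compat_add {R : pzRingType} {W : (R -> Prop) -> Prop} r1 r2 :
  (forall w, W w -> two_sided_ideal w) -> compat W r1 -> compat W r2 ->
  compat W (fun w => r1 w + r2 w).
Proof. move=> hW H1 H2 w w' Hw Hw' Hs; apply: eqm_add; [exact: hW|exact: H1|exact: H2]. Qed.

Lemma compat_mul {R : pzRingType} {W : (R -> Prop) -> Prop} r1 r2 :
  (forall w, W w -> two_sided_ideal w) -> compat W r1 -> compat W r2 ->
  compat W (fun w => r1 w * r2 w).
Proof. move=> hW H1 H2 w w' Hw Hw' Hs; apply: eqm_mul; [exact: hW|exact: H1|exact: H2]. Qed.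

Lemma compat_opp {R : pzRingType} {W : (R -> Prop) -> Prop} r1 :
  (forall w, W w -> two_sided_ideal w) -> compat W r1 ->
  compat W (fun w => - r1 w).
Proof. move=> hW H1 w w' Hw Hw' Hs; apply: eqm_opp; [exact: hW|exact: H1]. Qed.


Definition mk {R : pzRingType} {W : (R -> Prop) -> Prop}
  (hW : forall w, W w -> two_sided_ideal w) {r : (R -> Prop) -> R} (Hr : compat W r) : inv_limit W.
Proof.
refine (@InvLimit R W (fun w a => W w /\ eqm w a (r w)) _ _ _).
- move=> m Hm; exists (r m) => y; split; first by case.
  by move=> H; split.
- by move=> m Hn y [Hm _].
- move=> m m' Hm Hm' Hs y [_ Hy]; split => //.
  apply: (@eqm_trans _ _ (r m)); [exact: hW| exact: Hs | exact: Hr].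
Defined.

Lemma mk_mem {R : pzRingType} {W : (R -> Prop) -> Prop} {hW r} (Hr : compat W r) {w a} :
  W w -> (@mk R W hW r Hr w a <-> eqm w a (r w)).
Proof. by move=> Hw; split; [case| split]. Qed.

Lemma rep_mk {R : pzRingType} {W : (R -> Prop) -> Prop} {hW r} (Hr : compat W r) w :
  W w -> eqm w (rep (@mk R W hW r Hr) w) (r w).
Proof. move=> Hw; apply/(mk_mem Hr Hw); exact: rep_in. Qed.

Lemma add_iff {R : pzRingType} {W : (R -> Prop) -> Prop} (x y z : inv_limit W) :
  (forall w, W w -> two_sided_ideal w) ->
  lim_is_add x y z <-> forall w, W w -> eqm w (rep z w) (rep x w + rep y w).
Proof.
move=> hW; split.
  move=> H w Hw; apply: eqm_sym; first exact: hW.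
  by apply/(mem_rep z hW Hw); apply: H => //; apply: rep_in.
move=> H w Hw a b Ha Hb; apply/(mem_rep z hW Hw).
have Ht := hW w Hw.
apply: (@eqm_trans _ _ (rep x w + rep y w)) => //; last by apply: eqm_sym => //; apply: H.
by apply: eqm_add => //; apply/(mem_rep _ hW Hw).
Qed.

Lemma mul_iff {R : pzRingType} {W : (R -> Prop) -> Prop} (x y z : inv_limit W) :
  (forall w, W w -> two_sided_ideal w) ->
  lim_is_mul x y z <-> forall w, W w -> eqm w (rep z w) (rep x w * rep y w).
Proof.
move=> hW; split.
  move=> H w Hw; apply: eqm_sym; first exact: hW.
  by apply/(mem_rep z hW Hw); apply: H => //; apply: rep_in.
move=> H w Hw a b Ha Hb; apply/(mem_rep z hW Hw).
have Ht := hW w Hw.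
apply: (@eqm_trans _ _ (rep x w * rep y w)) => //; last by apply: eqm_sym => //; apply: H.
by apply: eqm_mul => //; apply/(mem_rep _ hW Hw).
Qed.

Lemma zero_iff {R : pzRingType} {W : (R -> Prop) -> Prop} (z : inv_limit W) :
  (forall w, W w -> two_sided_ideal w) ->
  lim_is_zero z <-> forall w, W w -> eqm w (rep z w) 0.
Proof.
move=> hW; split.
  move=> H w Hw; apply: eqm_sym; first exact: hW.
  by apply/(mem_rep z hW Hw); apply: H.
move=> H w Hw; apply/(mem_rep z hW Hw); apply: eqm_sym; [exact: hW| exact: H].
Qed.

Lemma J_zero {R : pzRingType} {W : (R -> Prop) -> Prop} {J : inv_limit W -> Prop} {z} :
  (forall w, W w -> two_sided_ideal w) -> lim_left_ideal J ->
  (forall w, W w -> eqm w (rep z w) 0) -> J z.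
Proof. by move=> hW [H0 _ _] H; apply: H0; apply/zero_iff. Qed.

Lemma J_add {R : pzRingType} {W : (R -> Prop) -> Prop} {J : inv_limit W -> Prop} {x y z} :
  (forall w, W w -> two_sided_ideal w) -> lim_left_ideal J -> J x -> J y ->
  (forall w, W w -> eqm w (rep z w) (rep x w + rep y w)) -> J z.
Proof. by move=> hW [_ HA _] Jx Jy H; apply: (HA x y) => //; apply/add_iff. Qed.

Lemma J_mul {R : pzRingType} {W : (R -> Prop) -> Prop} {J : inv_limit W -> Prop} {r x z} :
  (forall w, W w -> two_sided_ideal w) -> lim_left_ideal J -> compat W r -> J x ->
  (forall w, W w -> eqm w (rep z w) (r w * rep x w)) -> J z.
Proof.
move=> hW [_ _ HM] Hr Jx H; apply: (HM (mk hW Hr) x) => //; apply/mul_iff => // w Hw.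
have Ht := hW w Hw.
apply: (@eqm_trans _ _ (r w * rep x w)) => //; first exact: H.
apply: eqm_mul => //; last exact: eqm_refl.
apply: eqm_sym => //; exact: rep_mk.
Qed.

Lemma J_eqv {R : pzRingType} {W : (R -> Prop) -> Prop} {J : inv_limit W -> Prop} {q z} :
  (forall w, W w -> two_sided_ideal w) -> lim_left_ideal J -> J q ->
  (forall w, W w -> eqm w (rep z w) (rep q w)) -> J z.
Proof.
move=> hW HJ Jq H.
have Hr : compat W (fun w => rep z w - rep q w).
  by apply: compat_add => //; [exact: compat_rep| apply: compat_opp => //; exact: compat_rep].
apply: (@J_add _ _ _ (mk hW Hr) q z hW HJ) => //.
  apply: J_zero => // w Hw; have Ht := hW w Hw.
  apply: (@eqm_trans _ _ (rep z w - rep q w)) => //; first exact: rep_mk.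
  by rewrite -eqm_mem; apply: H.
move=> w Hw; have Ht := hW w Hw.
apply: (@eqm_trans _ _ ((rep z w - rep q w) + rep q w)) => //; first by rewrite subrK; exact: eqm_refl.
by apply: eqm_add => //; [apply: eqm_sym => //; exact: rep_mk | exact: eqm_refl].
Qed.


Lemma geom_l {R : pzRingType} (t : R) N :
  (1 - t) * (\sum_(i < N) t ^+ i) = 1 - t ^+ N.
Proof. by rewrite -opprB mulNr -subrX1 opprB. Qed.

Lemma geom_r {R : pzRingType} (t : R) N :
  (\sum_(i < N) t ^+ i) * (1 - t) = 1 - t ^+ N.
Proof.
rewrite -geom_l; symmetry; apply: commr_sum => i _.
by rewrite /GRing.comm mulrBl mulrBr mul1r mulr1 -exprS -exprSr.
Qed.

Lemma foldr_in {R : pzRingType} (B : (R -> Prop) -> Prop) s I :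
  foldr (fun I P => B I /\ P) True s -> List.In I s -> B I.
Proof. elim: s => [|J s IH] //= [H1 H2] [<-|HI] //; exact: IH. Qed.

Lemma ker_rad {R : pzRingType} (B : (R -> Prop) -> Prop)
  (hB2 : forall I, B I -> two_sided_ideal I) (x : inv_limit (inW B)) :
  (forall m, B m -> in_ker_proj m x) -> lim_jacobson_radical x.
Proof.
move=> Hker J [HJ [z0 Hz0] Hmax].
have hW : forall w, inW B w -> two_sided_ideal w by move=> w; apply: W_ti.
apply: NNPP => Jx.
pose K (z : inv_limit (inW B)) := exists j (r : (R -> Prop) -> R), [/\ compat (inW B) r, J j &
  forall w, inW B w -> eqm w (rep z w) (rep j w + r w * rep x w)].
have Hc0 : compat (inW B) (fun _ => 0 : R) by apply: compat_const.
have JK : forall z, J z -> K z.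
  move=> z Jz; exists z, (fun _ => 0); split => // w Hw.
  by apply: eqm_eq; [exact: hW| rewrite mul0r addr0].
have HK : lim_left_ideal K.
  split.
  - move=> z Hz; apply: JK; case: HJ => H0 _ _; exact: H0.
  - move=> x1 x2 z [j1 [r1 [Hr1 Jj1 E1]]] [j2 [r2 [Hr2 Jj2 E2]]] /(add_iff _ _ _ hW) Ez.
    have Hj : compat (inW B) (fun w => rep j1 w + rep j2 w).
      by apply: compat_add => //; apply: compat_rep.
    exists (mk hW Hj), (fun w => r1 w + r2 w); split.
    + exact: compat_add.
    + apply: (J_add hW HJ Jj1 Jj2) => w Hw; exact: rep_mk.
    + move=> w Hw; have Ht := hW w Hw.
      apply: (@eqm_trans _ _ (rep x1 w + rep x2 w)) => //; first exact: Ez.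
      apply: (@eqm_trans _ _ ((rep j1 w + r1 w * rep x w) + (rep j2 w + r2 w * rep x w))) => //.
        by apply: eqm_add => //; [apply: E1| apply: E2].
      apply: (@eqm_trans _ _ ((rep j1 w + rep j2 w) + (r1 w + r2 w) * rep x w)) => //.
        by apply: eqm_eq => //; rewrite mulrDl addrACA.
      apply: eqm_add => //; last exact: eqm_refl.
      apply: eqm_sym => //; exact: rep_mk.
  - move=> a z1 z [j [r [Hr Jj E]]] /(mul_iff _ _ _ hW) Ez.
    have Hj : compat (inW B) (fun w => rep a w * rep j w).
      by apply: compat_mul => //; apply: compat_rep.
    exists (mk hW Hj), (fun w => rep a w * r w); split.
    + by apply: compat_mul => //; apply: compat_rep.
    + apply: (J_mul hW HJ (compat_rep a hW) Jj) => w Hw; exact: rep_mk.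
    + move=> w Hw; have Ht := hW w Hw.
      apply: (@eqm_trans _ _ (rep a w * rep z1 w)) => //; first exact: Ez.
      apply: (@eqm_trans _ _ (rep a w * (rep j w + r w * rep x w))) => //.
        by apply: eqm_mul => //; [apply: eqm_refl| apply: E].
      apply: (@eqm_trans _ _ ((rep a w * rep j w) + (rep a w * r w) * rep x w)) => //.
        by apply: eqm_eq => //; rewrite mulrDr mulrA.
      apply: eqm_add => //; last exact: eqm_refl.
      apply: eqm_sym => //; exact: rep_mk.
have Kx : K x.
  exists (mk hW Hc0), (fun _ => 1); split => //.
  - by apply: compat_const.
  - by apply: (J_zero hW HJ) => w Hw; apply: rep_mk.
  - move=> w Hw; have Ht := hW w Hw.
    apply: (@eqm_trans _ _ (0 + 1 * rep x w)) => //.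
      by apply: eqm_eq => //; rewrite add0r mul1r.
    apply: eqm_add => //; last exact: eqm_refl.
    apply: eqm_sym => //; exact: rep_mk.
case: (Hmax K HK JK) => [Kall|KJ]; last by apply: Jx; apply: KJ.
have Hc1 : compat (inW B) (fun _ => 1 : R) by apply: compat_const.
have [j [r [Hr Jj E1]]] := Kall (mk hW Hc1).
pose t w := r w * rep x w.
have Htc : compat (inW B) t by apply: compat_mul => //; apply: compat_rep.
have E : forall w, inW B w -> eqm w (rep j w) (1 - t w).
  move=> w Hw; have Ht := hW w Hw.
  have E2 : eqm w 1 (rep j w + t w).
    apply: (@eqm_trans _ _ (rep (mk hW Hc1) w)) => //; last exact: E1.
    apply: eqm_sym => //; exact: rep_mk.
  apply: (@eqm_trans _ _ (rep j w + t w - t w)) => //.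
    by apply: eqm_eq => //; rewrite addrK.
  by apply: eqm_sub => //; [apply: eqm_sym| apply: eqm_refl].
have Nil : forall w, inW B w -> exists N, w (t w ^+ N).
  move=> w Hw; have [s [Hs Es]] := Hw; exists (size s); apply/Es.
  apply: foldr_pow => I HI.
  have BI := @foldr_in R B s I Hs HI.
  have HtI := hB2 I BI.
  have WI := @B_W R B I hB2 BI.
  have HwI : forall z, w z -> I z.
    move=> z /Es Hz; exact: (@foldr_sub R B s z hB2 Hs Hz I HI).
  apply: tiMl => //.
  apply/(Hker I BI).
  apply: (@lim_compat _ _ x w I Hw WI HwI); exact: rep_in.
pose Nw w := epsilon (inhabits 0%N) (fun N => w (t w ^+ N)).
have HNw : forall w, inW B w -> w (t w ^+ Nw w).
  move=> w Hw; rewrite /Nw; exact: (epsilon_spec (inhabits 0%N) (fun N => w (t w ^+ N)) (Nil w Hw)).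
pose u w := \sum_(i < Nw w) t w ^+ i.
have Hu : compat (inW B) u.
  move=> w w' Hw Hw' Hs; have Ht := hW w' Hw'.
  have A : eqm w' (u w * (1 - t w')) 1.
    apply: (@eqm_trans _ _ (u w * (1 - t w))) => //.
      apply: eqm_mul => //; first exact: eqm_refl.
      apply: eqm_sub => //; [exact: eqm_refl| apply: eqm_sym => //; exact: Htc].
    rewrite /u geom_r /eqm addrAC subrr add0r; apply: tiN => //; apply: Hs; exact: HNw.
  have Bq : eqm w' ((1 - t w') * u w') 1.
    rewrite /u geom_l /eqm addrAC subrr add0r; apply: tiN => //; exact: HNw.
  apply: (@eqm_trans _ _ (u w * ((1 - t w') * u w'))) => //.
    by rewrite -[X in eqm _ X _]mulr1; apply: eqm_mul => //; [apply: eqm_refl| apply: eqm_sym].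
  apply: (@eqm_trans _ _ (1 * u w')) => //; last by rewrite mul1r; apply: eqm_refl.
  by rewrite mulrA; apply: eqm_mul => //; apply: eqm_refl.
apply: Hz0.
have Hzu : compat (inW B) (fun w => rep z0 w * u w) by apply: compat_mul => //; apply: compat_rep.
have Hq : compat (inW B) (fun w => rep z0 w * u w * rep j w) by apply: compat_mul => //; apply: compat_rep.
have Jq : J (mk hW Hq) by apply: (J_mul hW HJ Hzu Jj) => w Hw; apply: rep_mk.
apply: (J_eqv hW HJ Jq) => w Hw; have Ht := hW w Hw.
apply: eqm_sym => //.
apply: (@eqm_trans _ _ (rep z0 w * u w * rep j w)) => //; first exact: rep_mk.
apply: (@eqm_trans _ _ (rep z0 w * u w * (1 - t w))) => //.
  by apply: eqm_mul => //; [apply: eqm_refl| apply: E].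
rewrite -mulrA /u geom_r mulrBr mulr1 /eqm addrAC subrr add0r.
apply: tiN => //; apply: tiMl => //; exact: HNw.
Qed.


Lemma rad_ker (k : fieldType) (G : algType k) (B : (G -> Prop) -> Prop)
  (hB : forall I, B I -> maximal_two_sided_ideal I /\ finite_codim I)
  (x : inv_limit (inW B)) : lim_jacobson_radical x -> forall m, B m -> in_ker_proj m x.
Proof.
move=> Hx m Bm.
have hB2 : forall I, B I -> two_sided_ideal I by move=> I /hB [[]].
have hW : forall w, inW B w -> two_sided_ideal w by move=> w; apply: W_ti.
have Wm := @B_W _ B m hB2 Bm.
have Htm := hB2 m Bm.
suff Hm : m (rep x m).
  move=> a; rewrite (mem_rep x hW Wm); split => H.
  - exact: (@eqm_memW _ m a _ Htm H Hm).
  - apply: (@eqm_trans _ _ 0) => //; first exact: (proj1 (eqm_mem m a) H).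
    apply: eqm_sym => //; exact: (proj1 (eqm_mem m _) Hm).
apply: NNPP => Hn.
have [mx fc] := hB m Bm.
have [M [HM HmM HMa]] := @avoid_maxleft k G m _ mx fc Hn.
pose J (y : inv_limit (inW B)) := M (rep y m).
have HMl : lideal M by case: HM.
have HJ : lim_left_ideal J.
  split.
  - move=> z /(zero_iff z hW) Hz; rewrite /J; apply: HmM; exact: (proj2 (eqm_mem m _) (Hz m Wm)).
  - move=> a b z Ja Jb /(add_iff a b z hW) Hz; rewrite /J.
    apply: (@li_eqm _ M m _ _ HMl HmM (Hz m Wm)); exact: liD.
  - move=> a b z Jb /(mul_iff a b z hW) Hz; rewrite /J.
    apply: (@li_eqm _ M m _ _ HMl HmM (Hz m Wm)); exact: liM.
have Hone : compat (inW B) (fun _ => 1 : G) by apply: compat_const.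
have HJm : lim_maximal_left_ideal J.
  split => //.
  - exists (mk hW Hone); rewrite /J => H; apply: (@ml_not1 _ M HM).
    apply: (@li_eqm _ M m _ _ HMl HmM _ H); apply: eqm_sym => //; exact: rep_mk.
  - move=> J' HJ' HJJ'.
    case: (classic (exists y, J' y /\ ~ J y)) => [[y [J'y Jy]]|Hn']; last first.
      right=> z J'z; apply: NNPP => Jz; apply: Hn'; by exists z.
    left=> u.
    have [c [d [Hc E]]] := @maxleft_gen _ M (rep y m) HM Jy 1.
    have Hr1 : compat (inW B) (fun w => rep u w * d).
      by apply: compat_mul => //; [apply: compat_rep| apply: compat_const].
    have Hv : compat (inW B) (fun w => rep u w * d * rep y w).
      by apply: compat_mul => //; apply: compat_rep.
    have J'v : J' (mk hW Hv) by apply: (J_mul hW HJ' Hr1 J'y) => w Hw; apply: rep_mk.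
    have He : compat (inW B) (fun w => rep u w - rep u w * d * rep y w).
      by apply: compat_add => //; [apply: compat_rep| apply: compat_opp].
    have Je : J (mk hW He).
      change (M (rep (mk hW He) m)); apply: (@li_eqm _ M m _ _ HMl HmM (rep_mk He m Wm)).
      have Ec : c = 1 - d * rep y m by rewrite E addrK.
      have -> : rep u m - rep u m * d * rep y m = rep u m * c.
        by rewrite Ec mulrBr mulr1 mulrA.
      exact: liM.
    apply: (J_add hW HJ' (HJJ' _ Je) J'v) => w Hw; have Ht := hW w Hw.
    apply: (@eqm_trans _ _ ((rep u w - rep u w * d * rep y w) + rep u w * d * rep y w)) => //.
      by apply: eqm_eq => //; rewrite subrK.
    by apply: eqm_add => //; apply: eqm_sym => //; apply: rep_mk.
exact: HMa (Hx J HJm).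
Qed.

Theorem mainTheorem20 (k : fieldType) (G : algType k)
  (sim : (G -> Prop) -> (G -> Prop) -> Prop)
  (sim_refl : forall m, cfs m -> sim m m)
  (sim_sym : forall m m', cfs m -> cfs m' -> sim m m' -> sim m' m)
  (sim_trans : forall m1 m2 m3, cfs m1 -> cfs m2 -> cfs m3 ->
                 sim m1 m2 -> sim m2 m3 -> sim m1 m3)
  (B : (G -> Prop) -> Prop) (m0 : G -> Prop) (Hm0 : cfs m0)
  (HB : forall m, B m <-> cfs m /\ sim m0 m) :
  forall x : inv_limit (inW B),
    lim_jacobson_radical x <-> (forall m, B m -> in_ker_proj m x).
Proof.
have hB : forall I, B I -> maximal_two_sided_ideal I /\ finite_codim I.
  by move=> I /HB [[H1 H2] _].
have hB2 : forall I, B I -> two_sided_ideal I by move=> I /hB [[]].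
move=> x; split; first exact: rad_ker.
exact: ker_rad.
Qed.
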